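(* Let $\Gamma$ be a Fuchsian group, viewed through its preimage in $\operatorname{SL}(2,\mathbb{R})$, and let $\beta\in\mathbb{R}\setminus\{0\}$ be such that $\Gamma$ contains $\Gamma_\infty=\left\{\pm\begin{pmatrix}1&k\\0&1\end{pmatrix}:k\in\mathbb{Z}\right\}$ and $\Gamma_0=\left\{\pm\begin{pmatrix}1&0\\k\beta^2&1\end{pmatrix}:k\in\mathbb{Z}\right\}$, where $\Gamma_\infty$ is the full stabilizer of $\infty$ in $\Gamma$ and $\Gamma_0$ the full stabilizer of $0$. If $\#\{\mathrm{Tr}(\Gamma)\cap[-n,n]\}=o(n\log n)$, then $A^2\in\operatorname{PSL}(2,\mathbb{Q})$ for every $A\in\Gamma$ (i.e. $\pm A^2$ has rational entries).
   Context: $\mathrm{Tr}(\Gamma)$ is the set of traces of all lifts to $\operatorname{SL}(2,\mathbb{R})$ of elements of $\Gamma$. $f=o(g)$ means $f(n)/g(n)\to0$. *)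

(* Defs.v *)
From Stdlib Require Import Reals Ensembles Finite_sets ZArith.
From Coquelicot Require Import Coquelicot.
Open Scope R_scope.

(* 2x2 real matrices [[ma, mb], [mc, md]] *)
Record Mat2 := mk2 { ma : R; mb : R; mc : R; md : R }.

Definition mmul (A B : Mat2) : Mat2 :=
  mk2 (ma A * ma B + mb A * mc B) (ma A * mb B + mb A * md B)
      (mc A * ma B + md A * mc B) (mc A * mb B + md A * md B).
Definition mdet (A : Mat2) : R := ma A * md A - mb A * mc A.
Definition mtr (A : Mat2) : R := ma A + md A.
Definition mopp (A : Mat2) : Mat2 := mk2 (- ma A) (- mb A) (- mc A) (- md A).
Definition mid : Mat2 := mk2 1 0 0 1.
(* inverse of a determinant-one matrix *)
Definition minv (A : Mat2) : Mat2 := mk2 (md A) (- mb A) (- mc A) (ma A).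

(* A Fuchsian group, viewed through its full preimage in SL(2,R):
   a subgroup of SL(2,R) containing -I, which is discrete
   (the identity is isolated). *)
Definition fuchsian_preimage (G : Mat2 -> Prop) : Prop :=
  (forall g, G g -> mdet g = 1) /\
  G mid /\
  (forall g h, G g -> G h -> G (mmul g h)) /\
  (forall g, G g -> G (minv g)) /\
  G (mopp mid) /\
  (exists eps, eps > 0 /\ forall g, G g ->
      Rabs (ma g - 1) < eps -> Rabs (mb g) < eps ->
      Rabs (mc g) < eps -> Rabs (md g - 1) < eps -> g = mid).

(* Moebius action z |-> (az+b)/(cz+d): g fixes infinity iff c = 0,
   g fixes 0 iff b = 0. *)
Definition fixes_inf (g : Mat2) : Prop := mc g = 0.
Definition fixes_zero (g : Mat2) : Prop := mb g = 0.

Definition Gamma_inf (g : Mat2) : Prop :=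
  exists k : Z, g = mk2 1 (IZR k) 0 1 \/ g = mopp (mk2 1 (IZR k) 0 1).
Definition Gamma_zero (beta : R) (g : Mat2) : Prop :=
  exists k : Z, g = mk2 1 0 (IZR k * beta ^ 2) 1 \/
                g = mopp (mk2 1 0 (IZR k * beta ^ 2) 1).

Definition TrSet (G : Mat2 -> Prop) : Ensemble R :=
  fun t => exists g, G g /\ t = mtr g.

Definition trace_window (G : Mat2 -> Prop) (n : nat) : Ensemble R :=
  fun t => TrSet G t /\ - INR n <= t <= INR n.

Definition is_rational (x : R) : Prop :=
  exists p q : Z, q <> 0%Z /\ x = IZR p / IZR q.

Definition rational_mat (A : Mat2) : Prop :=
  is_rational (ma A) /\ is_rational (mb A) /\
  is_rational (mc A) /\ is_rational (md A).

(* Main.v *)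
Require Import Defs.
From Stdlib Require Import Reals Ensembles Finite_sets ZArith.
From Coquelicot Require Import Coquelicot.
From Stdlib Require Import Finite_sets_facts List Lra Lia Classical.
Open Scope R_scope.

Lemma list_card (l : list R) : forall (E : Ensemble R) N, cardinal R E N -> NoDup l ->
  (forall x, List.In x l -> Ensembles.In R E x) -> (length l <= N)%nat.
Proof.
  induction l as [|x l IH]; intros E N HC HN Hin; simpl; [lia|].
  inversion HN; subst.
  assert (Hx : Ensembles.In R E x) by (apply Hin; left; reflexivity).
  pose proof (card_soustr_1 _ _ _ HC x Hx) as HC'.
  assert (N > 0)%nat by (apply (inh_card_gt_O _ E); [exists x; exact Hx|exact HC]).
  assert (length l <= Init.Nat.pred N)%nat; [|lia].
  apply (IH _ _ HC'); auto.
  intros y Hy. split.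
  - apply Hin; right; exact Hy.
  - intro Hq. inversion Hq; subst. contradiction.
Qed.

Lemma len_le1 (B : list R) : NoDup B -> (forall x y, List.In x B -> List.In y B -> x = y) -> (length B <= 1)%nat.
Proof.
  intros HN H. destruct B as [|a [|b t]]; simpl; try lia.
  inversion HN; subst. exfalso. apply H2. left. apply H; simpl; auto.
Qed.

Definition inb (x : R) (L : list R) : bool := if in_dec Req_dec_T x L then true else false.

Lemma inb_true x L : inb x L = true <-> List.In x L.
Proof. unfold inb; destruct (in_dec Req_dec_T x L); split; intros; congruence || tauto. Qed.

Section Union.
Variable l : nat -> list R.
Hypothesis Hnd : forall m, NoDup (l m).
Hypothesis Hint : forall m m' x y, m <> m' -> List.In x (l m) -> List.In x (l m') ->
   List.In y (l m) -> List.In y (l m') -> x = y.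

Lemma bad_count (M : nat) : forall (B : list R) m0, NoDup B -> (forall x, List.In x B -> List.In x (l m0)) ->
  (forall x, List.In x B -> exists m, (m < M)%nat /\ m <> m0 /\ List.In x (l m)) -> (length B <= M)%nat.
Proof.
  induction M as [|M IH]; intros B m0 HN H0 HB.
  - destruct B as [|x B]; simpl; [lia|]. destruct (HB x) as [m [? _]]; [left; auto|lia].
  - destruct (Nat.eq_dec M m0) as [e|ne].
    { subst. assert (length B <= m0)%nat; [|lia]. apply (IH B m0); auto.
      intros x Hx. destruct (HB x Hx) as [m [? [? ?]]]. exists m. split; [lia|auto]. }
    rewrite <- (filter_length (fun x => inb x (l M)) B).
    assert (length (filter (fun x => inb x (l M)) B) <= 1)%nat.
    { apply len_le1. apply NoDup_filter; auto.
      intros x y Hx Hy. apply filter_In in Hx, Hy. destruct Hx as [Hx Hx'], Hy as [Hy Hy'].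
      apply inb_true in Hx', Hy'.
      apply (Hint m0 M); auto. }
    assert (length (filter (fun x => negb (inb x (l M))) B) <= M)%nat; [|lia].
    apply (IH _ m0). apply NoDup_filter; auto.
    + intros x Hx. apply filter_In in Hx. apply H0; tauto.
    + intros x Hx. apply filter_In in Hx. destruct Hx as [Hx Hn].
      destruct (HB x Hx) as [m [Hm [Hm0 Hxm]]]. exists m.
      assert (m <> M). { intro; subst. rewrite (proj2 (inb_true x (l M)) Hxm) in Hn. discriminate. }
      split; [lia|split; auto].
Qed.

Fixpoint U (M : nat) : list R := match M with
  | O => nil
  | S M => U M ++ filter (fun x => negb (inb x (U M))) (l M) end.

Lemma U_in M x : List.In x (U M) -> exists m, (m < M)%nat /\ List.In x (l m).
Proof.
  induction M as [|M IH]; simpl; [tauto|]. intros H. apply in_app_or in H. destruct H as [H|H].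
  - destruct (IH H) as [m [? ?]]. exists m; split; auto; lia.
  - apply filter_In in H. exists M; split; [lia|tauto].
Qed.

Lemma U_nodup M : NoDup (U M).
Proof.
  induction M as [|M IH]; simpl; [constructor|]. apply NoDup_app; auto.
  - apply NoDup_filter; auto.
  - intros x Hx Hx'. apply filter_In in Hx'. destruct Hx' as [_ Hn].
    rewrite (proj2 (inb_true x (U M)) Hx) in Hn. discriminate.
Qed.

Lemma U_len M : (length (U (S M)) + M >= length (U M) + length (l M))%nat.
Proof.
  simpl. rewrite length_app.
  rewrite <- (filter_length (fun x => negb (inb x (U M))) (l M)).
  assert (length (filter (fun x => negb (negb (inb x (U M)))) (l M)) <= M)%nat; [|lia].
  apply (bad_count M _ M). apply NoDup_filter; auto.
  - intros x Hx; apply filter_In in Hx; tauto.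
  - intros x Hx. apply filter_In in Hx. destruct Hx as [Hx Hb]. rewrite Bool.negb_involutive in Hb.
    apply inb_true in Hb. destruct (U_in M x Hb) as [m [? ?]]. exists m; repeat split; auto; lia.
Qed.
End Union.

Lemma div_nonneg a b : 0 <= a -> 0 < b -> 0 <= a / b.
Proof. intros; unfold Rdiv; apply Rmult_le_pos; [auto|left; apply Rinv_0_lt_compat; auto]. Qed.

Definition flo (r : R) : nat := Z.to_nat (up r - 1).

Lemma flo_spec r : 0 <= r -> INR (flo r) <= r /\ r - 1 < INR (flo r).
Proof.
  intros Hr. destruct (archimed r) as [H1 H2].
  assert (Hp : (0 < up r)%Z) by (apply lt_IZR; lra).
  unfold flo. rewrite INR_IZR_INZ, Z2Nat.id by lia. rewrite minus_IZR. simpl. lra.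
Qed.

Definition prog (s e : R) (n : nat) : list R :=
  map (fun j => s + IZR (up (- s / e) + Z.of_nat j) * e) (seq 0 (flo (INR n / Rabs e))).

Lemma prog_nodup s e n : e <> 0 -> NoDup (prog s e n).
Proof.
  intros He. apply NoDup_map_NoDup_ForallPairs; [|apply seq_NoDup].
  intros a b _ _ Hab. assert (IZR (up (- s / e) + Z.of_nat a) = IZR (up (- s / e) + Z.of_nat b)).
  { apply (Rmult_eq_reg_r e); auto. lra. }
  apply eq_IZR in H. lia.
Qed.

Lemma prog_len s e n : e <> 0 -> INR n / Rabs e - 1 < INR (length (prog s e n)).
Proof.
  intros He. unfold prog. rewrite length_map, length_seq. apply flo_spec.
  apply div_nonneg; [apply pos_INR|apply Rabs_pos_lt; auto].
Qed.

Lemma prog_mem s e n x : e <> 0 -> List.In x (prog s e n) ->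
  (exists k, x = s + IZR k * e) /\ - INR n <= x <= INR n.
Proof.
  intros He Hx. unfold prog in Hx. apply in_map_iff in Hx. destruct Hx as [j [Hj Hjs]].
  apply in_seq in Hjs. split; [eexists; symmetry; exact Hj|].
  set (k0 := up (- s / e)) in *.
  assert (Hae : 0 < Rabs e) by (apply Rabs_pos_lt; auto).
  destruct (flo_spec (INR n / Rabs e)) as [F1 _].
  { apply div_nonneg; [apply pos_INR|auto]. }
  destruct (archimed (- s / e)) as [A1 A2]. fold k0 in A1, A2.
  assert (E0 : s + IZR k0 * e = e * (IZR k0 - (- s / e))) by (field; auto).
  assert (B0 : Rabs (s + IZR k0 * e) <= Rabs e).
  { rewrite E0, Rabs_mult, (Rabs_pos_eq (IZR k0 - _)) by lra. 
    rewrite <- (Rmult_1_r (Rabs e)) at 2. apply Rmult_le_compat_l; lra. }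
  assert (Hj1 : INR j + 1 <= INR n / Rabs e).
  { apply Rle_trans with (INR (flo (INR n / Rabs e))); auto.
    rewrite <- S_INR. apply le_INR. lia. }
  assert (Hb : Rabs x <= INR n).
  { rewrite <- Hj, plus_IZR, <- INR_IZR_INZ.
    replace (s + (IZR k0 + INR j) * e) with ((s + IZR k0 * e) + INR j * e) by ring.
    eapply Rle_trans; [apply Rabs_triang|]. rewrite Rabs_mult, (Rabs_pos_eq (INR j)) by apply pos_INR.
    apply Rle_trans with ((INR j + 1) * Rabs e); [lra|].
    apply Rle_trans with (INR n / Rabs e * Rabs e); [apply Rmult_le_compat_r; lra|].
    right; field; lra. }
  pose proof (Rle_abs x); pose proof (Rle_abs (-x)); rewrite Rabs_Ropp in *; lra.
Qed.

Fixpoint H (M : nat) : R := match M with O => 0 | S M => H M + / (INR M + 1) end.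

Lemma H_ln M : ln (INR M + 1) <= H M.
Proof.
  induction M as [|M IH]; simpl H.
  - simpl. rewrite Rplus_0_l, ln_1. lra.
  - rewrite S_INR.
    assert (P : 0 < INR M + 1) by (pose proof (pos_INR M); lra).
    assert (ln (INR M + 1 + 1) - ln (INR M + 1) <= / (INR M + 1)); [|lra].
    rewrite <- ln_div by lra.
    pose proof (exp_ineq1_le (ln ((INR M + 1 + 1) / (INR M + 1)))) as Q.
    rewrite exp_ln in Q. 2:{ apply Rdiv_lt_0_compat; lra. }
    assert ((INR M + 1 + 1) / (INR M + 1) = 1 + / (INR M + 1)) by (field; lra). lra.
Qed.

Section Core.
Variable G : Mat2 -> Prop.
Variable c : nat -> nat.
Hypothesis HC : forall n, cardinal R (trace_window G n) (c n).
Variables (s : nat -> R) (u v : R).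
Hypothesis Hv : v <> 0.
Hypothesis Hfam : forall (m : nat) (k : Z), TrSet G (s m + IZR k * (u + INR m * v)).
Hypothesis Hirr : forall p q : Z, q <> 0%Z -> IZR q * u <> IZR p * v.

Let e (m : nat) := u + INR m * v.
Let K := Rabs u + Rabs v.

Lemma K_pos : 0 < K.
Proof. unfold K. pose proof (Rabs_pos u); pose proof (Rabs_pos_lt v Hv); lra. Qed.

Lemma e_nz m : e m <> 0.
Proof.
  unfold e; intro E. apply (Hirr (- Z.of_nat m) 1); [lia|].
  rewrite opp_IZR, <- INR_IZR_INZ. lra.
Qed.

Lemma e_le m : Rabs (e m) <= (INR m + 1) * K.
Proof.
  unfold e, K. eapply Rle_trans; [apply Rabs_triang|]. rewrite Rabs_mult, (Rabs_pos_eq (INR m)) by apply pos_INR.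
  pose proof (pos_INR m); pose proof (Rabs_pos u); pose proof (Rabs_pos v). nra.
Qed.

Lemma inter n m m' x y : m <> m' -> List.In x (prog (s m) (e m) n) -> List.In x (prog (s m') (e m') n) ->
   List.In y (prog (s m) (e m) n) -> List.In y (prog (s m') (e m') n) -> x = y.
Proof.
  intros Hm H1 H2 H3 H4.
  destruct (prog_mem _ _ _ _ (e_nz m) H1) as [[a1 E1] _].
  destruct (prog_mem _ _ _ _ (e_nz m') H2) as [[b1 F1] _].
  destruct (prog_mem _ _ _ _ (e_nz m) H3) as [[a2 E2] _].
  destruct (prog_mem _ _ _ _ (e_nz m') H4) as [[b2 F2] _].
  destruct (Z.eq_dec a1 a2) as [Ea|Na]; [subst; lra|].
  assert (Eq : IZR (a1 - a2) * e m = IZR (b1 - b2) * e m') by (rewrite !minus_IZR; lra).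
  unfold e in Eq. rewrite !INR_IZR_INZ in Eq.
  destruct (Z.eq_dec (a1 - a2) (b1 - b2)) as [Eab|Nab].
  - exfalso. rewrite Eab in Eq.
    assert (IZR (b1 - b2) * (IZR (Z.of_nat m) - IZR (Z.of_nat m')) * v = 0) as Hz by lra.
    apply Rmult_integral in Hz. destruct Hz as [Hz|Hz]; [|contradiction].
    apply Rmult_integral in Hz. destruct Hz as [Hz|Hz].
    + apply eq_IZR in Hz. lia.
    + rewrite <- minus_IZR in Hz. apply eq_IZR in Hz. lia.
  - exfalso. apply (Hirr ((b1 - b2) * Z.of_nat m' - (a1 - a2) * Z.of_nat m) ((a1 - a2) - (b1 - b2))); [lia|].
    rewrite !minus_IZR, !mult_IZR, !minus_IZR. rewrite !minus_IZR in Eq.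
    apply Rminus_diag_uniq. rewrite <- (Rminus_diag_eq _ _ Eq). ring.
Qed.

Lemma main_bound n M : INR n / K * H M - 2 * INR M * INR M <= INR (c n).
Proof.
  set (l := fun m => prog (s m) (e m) n).
  assert (Hnd : forall m, NoDup (l m)) by (intro m; apply prog_nodup, e_nz).
  assert (Hi : forall m m' x y, m <> m' -> List.In x (l m) -> List.In x (l m') ->
     List.In y (l m) -> List.In y (l m') -> x = y) by (intros; eapply inter; eauto).
  assert (Hup : INR (length (U l M)) <= INR (c n)).
  { apply le_INR. apply (list_card _ _ _ (HC n)). apply U_nodup; auto.
    intros x Hx. destruct (U_in l M x Hx) as [m [_ Hm]].
    destruct (prog_mem _ _ _ _ (e_nz m) Hm) as [[k Ek] Hb].
    split; auto. rewrite Ek. apply Hfam. }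
  eapply Rle_trans; [|exact Hup]. clear Hup.
  pose proof K_pos as HK.
  induction M as [|M IH].
  - simpl. lra.
  - pose proof (U_len l Hnd Hi M) as UL. apply le_INR in UL. rewrite !plus_INR in UL.
    pose proof (prog_len (s M) (e M) n (e_nz M)) as PL. fold (l M) in PL.
    simpl H. rewrite S_INR.
    assert (P : 0 < INR M + 1) by (pose proof (pos_INR M); lra).
    assert (Q : INR n / K * / (INR M + 1) <= INR n / Rabs (e M)).
    { pose proof (Rabs_pos_lt _ (e_nz M)). pose proof (e_le M).
      replace (INR n / K * / (INR M + 1)) with (INR n / ((INR M + 1) * K)) by (field; lra).
      unfold Rdiv. apply Rmult_le_compat_l; [apply pos_INR|]. apply Rinv_le_contravar; auto. }
    pose proof (pos_INR M). nra.
Qed.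
End Core.

Lemma core (G : Mat2 -> Prop) (c : nat -> nat) (s : nat -> R) (u v : R) :
  (forall n, cardinal R (trace_window G n) (c n)) ->
  is_lim_seq (fun n => INR (c n) / (INR n * ln (INR n))) 0 ->
  v <> 0 ->
  (forall (m : nat) (k : Z), TrSet G (s m + IZR k * (u + INR m * v))) ->
  exists p q : Z, q <> 0%Z /\ IZR q * u = IZR p * v.
Proof.
  intros HC Hlim Hv Hfam. apply NNPP; intro Hn.
  assert (Hirr : forall p q : Z, q <> 0%Z -> IZR q * u <> IZR p * v) by (intros p q Hq E; apply Hn; eauto).
  set (K := Rabs u + Rabs v).
  assert (HK : 0 < K) by (unfold K; pose proof (Rabs_pos u); pose proof (Rabs_pos_lt v Hv); lra).
  apply is_lim_seq_spec in Hlim.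
  assert (Hp : 0 < / (4 * K)) by (apply Rinv_0_lt_compat; lra).
  destruct (Hlim (mkposreal _ Hp)) as [N HN]. simpl in HN.
  destruct (archimed (exp (4 * K))) as [A1 _].
  pose proof (exp_pos (4 * K)).
  assert (Hup : (0 < up (exp (4 * K)))%Z) by (apply lt_IZR; lra).
  set (M := (N + 2 + Z.to_nat (up (exp (4 * K))))%nat).
  assert (HM : exp (4 * K) <= INR M).
  { unfold M. rewrite !plus_INR. rewrite (INR_IZR_INZ (Z.to_nat _)), Z2Nat.id by lia.
    pose proof (pos_INR N). simpl. lra. }
  assert (HM2 : 2 <= INR M) by (unfold M; rewrite !plus_INR; pose proof (pos_INR N); pose proof (pos_INR (Z.to_nat (up (exp (4*K))))); simpl; lra).
  assert (HL : 4 * K <= ln (INR M)) by (rewrite <- (ln_exp (4 * K)); apply ln_le; auto).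
  assert (HLp : 0 < ln (INR M)) by lra.
  set (n := (M * M)%nat).
  assert (Hn' : (n >= N)%nat) by (unfold n, M; nia).
  specialize (HN n Hn').
  assert (En : INR n = INR M * INR M) by (unfold n; apply mult_INR).
  assert (Eln : ln (INR n) = 2 * ln (INR M)) by (rewrite En, ln_mult by lra; ring).
  rewrite Eln, En, Rminus_0_r in HN.
  set (L := ln (INR M)) in *. set (Q := INR M * INR M) in *.
  assert (HQ : 0 < Q) by (unfold Q; nra).
  assert (Up : INR (c n) < Q * (2 * L) * / (4 * K)).
  { pose proof (Rle_abs (INR (c n) / (Q * (2 * L)))).
    assert (INR (c n) / (Q * (2 * L)) < / (4 * K)) as W by lra.
    apply (Rmult_lt_compat_r (Q * (2 * L))) in W; [|nra].
    unfold Rdiv in W. rewrite Rmult_assoc, Rinv_l, Rmult_1_r in W by nra. lra. }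
  pose proof (main_bound G c HC s u v Hv Hfam Hirr n M) as Lo. fold K in Lo. rewrite En in Lo. fold Q in Lo.
  pose proof (H_ln M) as HH.
  assert (ln (INR M) <= ln (INR M + 1)) as W by (apply ln_le; lra). fold L in W.
  assert (Q / K * L - 2 * Q < Q * (2 * L) * / (4 * K)).
  { assert (Q / K * L <= Q / K * H M). { apply Rmult_le_compat_l; [|lra]. apply div_nonneg; lra. }
    assert (2 * INR M * INR M = 2 * Q) by (unfold Q; ring). lra. }
  assert (Q * L / K - 2 * Q < Q * L / K / 2) by (replace (Q * L / K) with (Q / K * L) by (field; lra);
    replace (Q / K * L / 2) with (Q * (2 * L) * / (4 * K)) by (field; lra); lra).
  assert (L / K < 4).
  { assert (Q * (L / K / 2 - 2) < 0) by (replace (Q * (L / K / 2 - 2)) with (Q * L / K / 2 - 2 * Q) by (field; lra); lra).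
    assert (L / K / 2 - 2 < 0); [|lra].
    destruct (Rlt_or_le (L / K / 2 - 2) 0); auto. nra. }
  assert (4 <= L / K). { apply (Rmult_le_reg_r K); auto. unfold Rdiv; rewrite Rmult_assoc, Rinv_l, Rmult_1_r by lra. lra. }
  lra.
Qed.

Lemma rat_IZR z : is_rational (IZR z).
Proof. exists z, 1%Z. split; [lia|]. simpl. field. Qed.

Lemma rat_add a b : is_rational a -> is_rational b -> is_rational (a + b).
Proof.
  intros [p1 [q1 [H1 E1]]] [p2 [q2 [H2 E2]]]. exists (p1 * q2 + p2 * q1)%Z, (q1 * q2)%Z.
  split; [nia|]. subst. rewrite plus_IZR, !mult_IZR. field. split; apply not_0_IZR; auto.
Qed.

Lemma rat_mul a b : is_rational a -> is_rational b -> is_rational (a * b).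
Proof.
  intros [p1 [q1 [H1 E1]]] [p2 [q2 [H2 E2]]]. exists (p1 * p2)%Z, (q1 * q2)%Z.
  split; [nia|]. subst. rewrite !mult_IZR. field. split; apply not_0_IZR; auto.
Qed.

Lemma rat_opp a : is_rational a -> is_rational (- a).
Proof. intros H. replace (- a) with (IZR (-1) * a) by (simpl; ring). apply rat_mul; auto; apply rat_IZR. Qed.

Lemma rat_sub a b : is_rational a -> is_rational b -> is_rational (a - b).
Proof. intros; unfold Rminus; apply rat_add; auto; apply rat_opp; auto. Qed.

Lemma rat_inv a : is_rational a -> a <> 0 -> is_rational (/ a).
Proof.
  intros [p [q [H E]]] Ha. assert (p <> 0%Z) by (intro; subst; apply Ha; simpl; unfold Rdiv; ring).
  exists q, p. split; auto. subst. field. split; apply not_0_IZR; auto.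
Qed.

Lemma rat_div a b : is_rational a -> is_rational b -> b <> 0 -> is_rational (a / b).
Proof. intros; unfold Rdiv; apply rat_mul; auto; apply rat_inv; auto. Qed.

Definition Tk (k : Z) := mk2 1 (IZR k) 0 1.
Definition Sm (beta : R) (k : Z) := mk2 1 0 (IZR k * beta ^ 2) 1.

Definition PP (A : Mat2) := exists lam r1 r2 r3 r4, is_rational (lam * lam) /\
  is_rational r1 /\ is_rational r2 /\ is_rational r3 /\ is_rational r4 /\
  ma A = lam * r1 /\ mb A = lam * r2 /\ mc A = lam * r3 /\ md A = lam * r4.

Lemma PP_sq A : PP A -> exists s : Mat2, (s = mmul A A \/ s = mopp (mmul A A)) /\ rational_mat s.
Proof.
  intros [lam [r1 [r2 [r3 [r4 [Hl [R1 [R2 [R3 [R4 [E1 [E2 [E3 E4]]]]]]]]]]]]].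
  exists (mmul A A). split; [left; reflexivity|]. unfold rational_mat, mmul; simpl.
  rewrite E1, E2, E3, E4.
  repeat split.
  - replace (lam * r1 * (lam * r1) + lam * r2 * (lam * r3)) with (lam * lam * (r1 * r1 + r2 * r3)) by ring.
    apply rat_mul; auto. apply rat_add; apply rat_mul; auto.
  - replace (lam * r1 * (lam * r2) + lam * r2 * (lam * r4)) with (lam * lam * (r1 * r2 + r2 * r4)) by ring.
    apply rat_mul; auto. apply rat_add; apply rat_mul; auto.
  - replace (lam * r3 * (lam * r1) + lam * r4 * (lam * r3)) with (lam * lam * (r3 * r1 + r4 * r3)) by ring.
    apply rat_mul; auto. apply rat_add; apply rat_mul; auto.
  - replace (lam * r3 * (lam * r2) + lam * r4 * (lam * r4)) with (lam * lam * (r3 * r2 + r4 * r4)) by ring.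
    apply rat_mul; auto. apply rat_add; apply rat_mul; auto.
Qed.

Lemma PP_T A : PP A -> PP (mmul (Tk (-1)) A).
Proof.
  intros [lam [r1 [r2 [r3 [r4 [Hl [R1 [R2 [R3 [R4 [E1 [E2 [E3 E4]]]]]]]]]]]]].
  exists lam, (r1 - r3), (r2 - r4), r3, r4. repeat split; auto using rat_sub;
  unfold mmul, Tk; simpl; rewrite ?E1, ?E2, ?E3, ?E4; ring.
Qed.


Lemma lin_eq (X Y P Q k : R) : P = Q -> X - Y = k * (P - Q) -> X = Y.
Proof. intros E1 E2. rewrite E1 in E2. replace (k * (Q - Q)) with 0 in E2 by ring. lra. Qed.

Lemma alg (a b c d x m1 m2 r1 s1 r2 s2 : R) : b <> 0 -> x <> 0 -> m1 <> m2 ->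
  c + m1 * x * d = r1 * (a + m1 * x * b) -> b = s1 * (a + m1 * x * b) ->
  c + m2 * x * d = r2 * (a + m2 * x * b) -> b = s2 * (a + m2 * x * b) ->
  s1 <> 0 /\ s2 <> 0 /\
  a = b * (/ s1 - m1 * x) /\
  d = b * ((r1 / s1 - r2 / s2) / ((m1 - m2) * x)) /\
  c = b * (r1 / s1 - m1 * x * ((r1 / s1 - r2 / s2) / ((m1 - m2) * x))).
Proof.
  intros Hb Hx Hm C1 B1 C2 B2.
  assert (S1 : s1 <> 0) by (intro; subst; apply Hb; rewrite B1; ring).
  assert (S2 : s2 <> 0) by (intro; subst; apply Hb; rewrite B2; ring).
  assert (A1 : a + m1 * x * b = b / s1).
  { replace (b / s1) with (s1 * (a + m1 * x * b) / s1) by (rewrite <- B1; reflexivity). field. auto. }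
  assert (A2 : a + m2 * x * b = b / s2).
  { replace (b / s2) with (s2 * (a + m2 * x * b) / s2) by (rewrite <- B2; reflexivity). field. auto. }
  rewrite A1 in C1. rewrite A2 in C2.
  assert (Hmx : (m1 - m2) * x <> 0) by (apply Rmult_integral_contrapositive; split; lra).
  assert (Dd : d = b * ((r1 / s1 - r2 / s2) / ((m1 - m2) * x))).
  { apply (lin_eq _ _ ((c + m1 * x * d) - (c + m2 * x * d)) (r1 * (b / s1) - r2 * (b / s2)) (/ ((m1 - m2) * x))).
    - rewrite C1, C2. reflexivity.
    - field. repeat split; try assumption; intro; apply Hm; lra. }
  split; [auto|split; [auto|split; [|split; [exact Dd|]]]].
  - apply (lin_eq _ _ _ _ 1 A1). field. auto.
  - rewrite Dd in C1. apply (lin_eq _ _ _ _ 1 C1). field. repeat split; try assumption; intro; apply Hm; lra.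
Qed.

Section Main.
Variable G : Mat2 -> Prop.
Variable beta : R.
Variable c : nat -> nat.
Hypothesis HF : fuchsian_preimage G.
Hypothesis Hb : beta <> 0.
Hypothesis Hinf : forall g, Gamma_inf g -> G g.
Hypothesis Hzero : forall g, Gamma_zero beta g -> G g.
Hypothesis HC : forall n, cardinal R (trace_window G n) (c n).
Hypothesis Hlim : is_lim_seq (fun n => INR (c n) / (INR n * ln (INR n))) 0.

Lemma x_pos : 0 < beta ^ 2.
Proof. simpl. rewrite Rmult_1_r. destruct (Rlt_or_le 0 beta); [nra|]. assert (beta < 0) by lra. nra. Qed.

Lemma G_T k : G (Tk k).
Proof. apply Hinf. exists k. left. reflexivity. Qed.
Lemma G_S k : G (Sm beta k).
Proof. apply Hzero. exists k. left. reflexivity. Qed.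
Lemma G_mul g h : G g -> G h -> G (mmul g h).
Proof. destruct HF as [_ [_ [Hm _]]]. auto. Qed.
Lemma G_det g : G g -> mdet g = 1.
Proof. destruct HF as [Hd _]. auto. Qed.

Lemma L1 A : G A -> ma A <> 0 -> exists p q : Z, q <> 0%Z /\ IZR q * mc A = IZR p * (beta ^ 2 * ma A).
Proof.
  intros HA Ha. apply (core G c (fun m => ma A + md A + INR m * beta ^ 2 * mb A)); auto.
  - pose proof x_pos. apply Rmult_integral_contrapositive; split; lra.
  - intros m k. exists (mmul (Tk k) (mmul (Sm beta (Z.of_nat m)) A)). split.
    + apply G_mul; [apply G_T|apply G_mul; [apply G_S|auto]].
    + unfold mtr, mmul, Tk, Sm; simpl. rewrite <- INR_IZR_INZ. ring.
Qed.

Lemma L2 A : G A -> ma A <> 0 -> exists p q : Z, q <> 0%Z /\ IZR q * (beta ^ 2 * mb A) = IZR p * (beta ^ 2 * ma A).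
Proof.
  intros HA Ha. apply (core G c (fun m => ma A + md A + INR m * mc A)); auto.
  - pose proof x_pos. apply Rmult_integral_contrapositive; split; lra.
  - intros m k. exists (mmul (Sm beta k) (mmul A (Tk (Z.of_nat m)))). split.
    + apply G_mul; [apply G_S|apply G_mul; [auto|apply G_T]].
    + unfold mtr, mmul, Tk, Sm; simpl. rewrite <- INR_IZR_INZ. ring.
Qed.

Lemma x_rat : is_rational (beta ^ 2).
Proof.
  pose proof x_pos as Hx.
  destruct (L1 (mmul (Tk 1) (Sm beta 1))) as [p [q [Hq E]]].
  - apply G_mul; [apply G_T|apply G_S].
  - unfold mmul, Tk, Sm; simpl. lra.
  - unfold mmul, Tk, Sm in E; simpl in E.
    assert (E' : IZR q = IZR p * (1 + beta ^ 2)).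
    { apply (Rmult_eq_reg_r (beta ^ 2)); [|lra]. simpl in *. nra. }
    assert (Hp : p <> 0%Z) by (intro; subst; apply Hq; apply eq_IZR; rewrite E'; simpl; ring).
    replace (beta ^ 2) with (IZR q / IZR p - 1).
    + apply rat_sub; [apply rat_div; try apply rat_IZR; apply not_0_IZR; auto|apply rat_IZR].
    + rewrite E'. field. apply not_0_IZR; auto.
Qed.

Lemma Rat1 B : G B -> ma B <> 0 -> exists rho sig, is_rational rho /\ is_rational sig /\
   mc B = rho * ma B /\ mb B = sig * ma B.
Proof.
  intros HB Ha. pose proof x_pos as Hx.
  destruct (L1 B HB Ha) as [p1 [q1 [Hq1 E1]]].
  destruct (L2 B HB Ha) as [p2 [q2 [Hq2 E2]]].
  assert (Q1 := not_0_IZR _ Hq1). assert (Q2 := not_0_IZR _ Hq2).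
  exists (IZR p1 * beta ^ 2 / IZR q1), (IZR p2 / IZR q2). repeat split.
  - apply rat_div; [apply rat_mul; [apply rat_IZR|apply x_rat]|apply rat_IZR|auto].
  - apply rat_div; [apply rat_IZR|apply rat_IZR|auto].
  - apply (Rmult_eq_reg_l (IZR q1)); auto. rewrite E1. field. auto.
  - apply (Rmult_eq_reg_l (IZR q2 * beta ^ 2)). 2:{ apply Rmult_integral_contrapositive; split; lra. }
    replace (IZR q2 * beta ^ 2 * mb B) with (IZR q2 * (beta ^ 2 * mb B)) by ring. rewrite E2. field. auto.
Qed.


Lemma PP_pair A m1 m2 : G A -> mb A <> 0 -> m1 <> m2 ->
  ma A + IZR m1 * beta ^ 2 * mb A <> 0 -> ma A + IZR m2 * beta ^ 2 * mb A <> 0 -> PP A.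
Proof.
  intros HA Hbn Hm N1 N2. pose proof x_pos as Hx.
  assert (G1 : G (mmul A (Sm beta m1))) by (apply G_mul; auto; apply G_S).
  assert (G2 : G (mmul A (Sm beta m2))) by (apply G_mul; auto; apply G_S).
  assert (Ea1 : ma (mmul A (Sm beta m1)) = ma A + IZR m1 * beta ^ 2 * mb A) by (unfold mmul, Sm; simpl; ring).
  assert (Eb1 : mb (mmul A (Sm beta m1)) = mb A) by (unfold mmul, Sm; simpl; ring).
  assert (Ec1 : mc (mmul A (Sm beta m1)) = mc A + IZR m1 * beta ^ 2 * md A) by (unfold mmul, Sm; simpl; ring).
  assert (Ea2 : ma (mmul A (Sm beta m2)) = ma A + IZR m2 * beta ^ 2 * mb A) by (unfold mmul, Sm; simpl; ring).
  assert (Eb2 : mb (mmul A (Sm beta m2)) = mb A) by (unfold mmul, Sm; simpl; ring).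
  assert (Ec2 : mc (mmul A (Sm beta m2)) = mc A + IZR m2 * beta ^ 2 * md A) by (unfold mmul, Sm; simpl; ring).
  destruct (Rat1 _ G1) as [r1 [s1 [Q1 [T1 [C1 B1]]]]]; [rewrite Ea1; auto|].
  destruct (Rat1 _ G2) as [r2 [s2 [Q2 [T2 [C2 B2]]]]]; [rewrite Ea2; auto|].
  rewrite Ea1, Ec1 in C1. rewrite Ea1, Eb1 in B1. rewrite Ea2, Ec2 in C2. rewrite Ea2, Eb2 in B2.
  assert (Hm' : IZR m1 <> IZR m2) by (intro E; apply eq_IZR in E; auto).
  destruct (alg (ma A) (mb A) (mc A) (md A) (beta ^ 2) (IZR m1) (IZR m2) r1 s1 r2 s2 Hbn ltac:(lra) Hm' C1 B1 C2 B2)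
    as [S1 [S2 [Ea [Ed Ec]]]].
  set (x := beta ^ 2) in *.
  set (q4 := (r1 / s1 - r2 / s2) / ((IZR m1 - IZR m2) * x)) in *.
  set (q1 := / s1 - IZR m1 * x) in *.
  set (q3 := r1 / s1 - IZR m1 * x * q4) in *.
  assert (Xr : is_rational x) by (apply x_rat).
  assert (R4 : is_rational q4).
  { unfold q4. apply rat_div. apply rat_sub; apply rat_div; auto.
    apply rat_mul; auto. apply rat_sub; apply rat_IZR.
    apply Rmult_integral_contrapositive; split; lra. }
  assert (R1 : is_rational q1).
  { unfold q1. apply rat_sub. apply rat_inv; auto. apply rat_mul; auto. apply rat_IZR. }
  assert (R3 : is_rational q3).
  { unfold q3. apply rat_sub. apply rat_div; auto. apply rat_mul; auto. apply rat_mul; auto. apply rat_IZR. }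
  pose proof (G_det A HA) as Hdet. unfold mdet in Hdet. rewrite Ea, Ed, Ec in Hdet.
  assert (Hd : mb A * mb A * (q1 * q4 - q3) = 1) by (rewrite <- Hdet; ring).
  assert (Dn : q1 * q4 - q3 <> 0) by (intro E; rewrite E in Hd; lra).
  exists (mb A), q1, 1, q3, q4. repeat split; auto.
  - replace (mb A * mb A) with (/ (q1 * q4 - q3)).
    + apply rat_inv; auto. apply rat_sub; auto. apply rat_mul; auto.
    + apply (Rmult_eq_reg_r (q1 * q4 - q3)); auto. rewrite Hd. field. auto.
  - apply rat_IZR.
  - ring.
Qed.

Lemma lin3 a x b i j : a + i * x * b = 0 -> a + j * x * b = 0 -> i <> j -> x * b = 0.
Proof.
  intros H1 H2 Hij. assert (E : (i - j) * (x * b) = 0).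
  { replace ((i - j) * (x * b)) with ((a + i * x * b) - (a + j * x * b)) by ring. rewrite H1, H2. ring. }
  apply Rmult_integral in E. destruct E; [exfalso; apply Hij; lra|auto].
Qed.

Lemma PP_b A : G A -> mb A <> 0 -> PP A.
Proof.
  intros HA Hbn. pose proof x_pos as Hx.
  destruct (Req_dec_T (ma A + IZR 1 * beta ^ 2 * mb A) 0) as [E1|E1].
  - apply (PP_pair A 2 3); auto; try lia; intro E';
    (assert (Z : beta ^ 2 * mb A = 0) by (eapply lin3; [exact E1|exact E'|intro Q; apply eq_IZR in Q; lia]));
    apply Rmult_integral in Z; destruct Z as [Z|Z]; first [lra | exact (Hbn Z)].
  - destruct (Req_dec_T (ma A + IZR 2 * beta ^ 2 * mb A) 0) as [E2|E2].
    + apply (PP_pair A 1 3); auto; try lia; intro E';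
      (assert (Z : beta ^ 2 * mb A = 0) by (eapply lin3; [exact E2|exact E'|intro Q; apply eq_IZR in Q; lia]));
      apply Rmult_integral in Z; destruct Z as [Z|Z]; first [lra | exact (Hbn Z)].
    + apply (PP_pair A 1 2); auto; lia.
Qed.

Lemma PP_all A : G A -> PP A.
Proof.
  intros HA. destruct (Req_dec_T (mb A) 0) as [E|E]; [|apply PP_b; auto].
  assert (Hd : md A <> 0).
  { pose proof (G_det A HA) as Hdet. unfold mdet in Hdet. rewrite E in Hdet. intro D; rewrite D in Hdet; lra. }
  assert (HB : G (mmul (Tk 1) A)) by (apply G_mul; auto; apply G_T).
  assert (PB : PP (mmul (Tk 1) A)) by (apply PP_b; auto; unfold mmul, Tk; simpl; rewrite E; intro; apply Hd; lra).
  apply PP_T in PB. replace A with (mmul (Tk (-1)) (mmul (Tk 1) A)); auto.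
  destruct A; unfold mmul, Tk; simpl; f_equal; ring.
Qed.
End Main.

Theorem lemma4p1 (G : Mat2 -> Prop) (beta : R) :
  fuchsian_preimage G ->
  beta <> 0 ->
  (forall g, G g -> (fixes_inf g <-> Gamma_inf g)) ->
  (forall g, Gamma_inf g -> G g) ->
  (forall g, G g -> (fixes_zero g <-> Gamma_zero beta g)) ->
  (forall g, Gamma_zero beta g -> G g) ->
  (exists c : nat -> nat,
     (forall n, cardinal R (trace_window G n) (c n)) /\
     is_lim_seq (fun n => INR (c n) / (INR n * ln (INR n))) 0) ->
  forall A, G A ->
    exists s : Mat2, (s = mmul A A \/ s = mopp (mmul A A)) /\ rational_mat s.
Proof.
  intros HF Hb _ Hinf _ Hzero [c [HC Hlim]] A HA.
  apply PP_sq. apply (PP_all G beta c HF Hb Hinf Hzero HC Hlim); auto.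
Qed.
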